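(* Let $G=(V\cup\{O\},E)$ be a connected, unweighted, undirected graph, where $V$ is a set of $n$ terminals and $O\notin V$ is the depot, and let $k\in[1,n]$ be an integer tour capacity. Let $\mathrm{OPT}$ be an optimal solution to the graphic CVRP on this instance, let $T=z_1z_2\dots z_p$ be a tour in $\mathrm{OPT}$, let $U\subseteq V$ be the (nonempty) set of terminals whose demands are covered by $T$, and let $D=\sum_{v\in U}\mathrm{dist}(v)$. Then \[ \mathrm{cost}(T)\geq \frac{2D}{|U|}+\frac{|U|}{2}-\frac{1}{2|U|}. \]
   Context: For $v\in V$, $\mathrm{dist}(v)$ is the number of edges on a shortest $v$-to-$O$ path in $G$. A tour is a walk $z_1z_2\dots z_p$ in $G$ with $z_1=z_p=O$ and $(z_i,z_{i+1})\in E$ for all $i\in[1,p-1]$; its cost $\mathrm{cost}(T)$ is $p-1$. In the graphic CVRP, each terminal has unit demand; a feasible solution is a set of tours together with an assignment of each terminal to exactly one tour that visits it (that tour covers its demand), such that each tour covers at most $k$ terminals. The cost of a solution is the total cost of its tours; an optimal solution is a feasible solution of minimum cost. *)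

(* Defs.v *)
From mathcomp Require Import all_boot all_order all_algebra.
Set Implicit Arguments. Unset Strict Implicit. Unset Printing Implicit Defensive.

(* The graph is G = (T, e) with T a finite type of vertices,
   e a symmetric irreflexive (simple, undirected, unweighted) edge relation,
   O : T the depot; the terminals V are all the vertices other than O. *)

Section CVRP.
Variables (T : finType) (e : rel T) (O : T).

Definition terminals : {set T} := [set v | v != O].

Definition walk_of_len (v : T) (d : nat) : bool :=
  [exists p : d.-tuple T, path e v p && (last v p == O)].

(* dist v = number of edges on a shortest v-to-O path; in a connected graph
   this is < #|T|, so it is the least d in [0, #|T|) with such a walk
   (find on iota 0 #|T| returns exactly that d). *)
Definition dist (v : T) : nat := find (walk_of_len v) (iota 0 #|T|).

Definition is_tour (s : seq T) : bool :=
  if s is z :: s' then [&& z == O, path e z s' & last z s' == O] else false.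

Definition tour_cost (s : seq T) : nat := (size s).-1.

Definition covered (asg : T -> nat) (i : nat) : {set T} :=
  [set v in terminals | asg v == i].

Definition feasible (k : nat) (tours : seq (seq T)) (asg : T -> nat) : Prop :=
  [/\ all is_tour tours,
      (forall v, v \in terminals ->
         asg v < size tours /\ v \in nth [::] tours (asg v))
    & (forall i, i < size tours -> #|covered asg i| <= k)].

Definition sol_cost (tours : seq (seq T)) : nat := sumn (map tour_cost tours).

Definition optimal (k : nat) (tours : seq (seq T)) (asg : T -> nat) : Prop :=
  feasible k tours asg /\
  forall tours' asg', feasible k tours' asg' -> sol_cost tours <= sol_cost tours'.

End CVRP.

(* Main.v *)
Require Import Defs.
From mathcomp Require Import all_boot all_order all_algebra zify ring.
Import Order.TTheory GRing.Theory Num.Theory.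
Set Implicit Arguments. Unset Strict Implicit. Unset Printing Implicit Defensive.

Lemma dist_le (T : finType) (e : rel T) (O v : T) d :
  walk_of_len e O v d -> dist e O v <= d.
Proof.
move=> w; rewrite /dist; case: (ltnP d #|T|) => h; last first.
  by apply: leq_trans (find_size _ _) _; rewrite size_iota.
rewrite leqNgt; apply/negP => lt.
have := before_find 0 lt; rewrite nth_iota // add0n w //.
Qed.

Lemma walk_path (T : finType) (e : rel T) (O x : T) p :
  path e x p -> last x p = O -> walk_of_len e O x (size p).
Proof.
move=> hp hl; apply/existsP; exists (in_tuple p); by rewrite /= hp hl eqxx.
Qed.

Lemma walks (T : finType) (e : rel T) (O : T) (e_sym : symmetric e)
  (A B l' : seq T) v x0 :
  x0 :: l' = A ++ v :: B -> x0 = O -> path e x0 l' -> last x0 l' = O ->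
  walk_of_len e O v (size B) /\ walk_of_len e O v (size A).
Proof.
case: A => [|y A'] /=.
  case=> -> -> -> hp hl; split; first exact: walk_path.
  by apply/existsP; exists (in_tuple [::]); rewrite /= eqxx.
case=> -> -> ->; rewrite cat_path /= => /and3P [p1 e1 p2] hl.
split.
  by apply: walk_path => //; rewrite last_cat in hl.
have hr : path e O (rcons A' v) by rewrite rcons_path p1 e1.
have := hr; rewrite -(@eq_path _ (fun z : T => e^~ z)); last first.
  by move=> a b; rewrite e_sym.
rewrite -rev_path last_rcons belast_rcons => hp.
have := walk_path hp; rewrite size_rev /=; apply.
by rewrite rev_cons last_rcons.
Qed.
Lemma comb (c : nat) (S : {set 'I_c.+1}) :
  4 * (\sum_(j in S) minn j (c - j)) + #|S| * #|S| <= 2 * #|S| * c + 1.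
Proof.
have: #|S| <= #|S| by [].
move: {2}#|S| => m; elim: m S => [|m IH] S hS.
  by move: hS; rewrite leqn0 cards_eq0 => /eqP ->; rewrite big_set0 cards0.
have [S0|/set0Pn [m0 m0S]] := eqVneq S set0.
  by rewrite S0 big_set0 cards0.
case: (arg_minnP (fun j : 'I_c.+1 => (j : nat)) m0S) => a aS aP.
case: (arg_maxnP (fun j : 'I_c.+1 => (j : nat)) m0S) => b bS bP.
have aSi : a \in S by [].
have bSi : b \in S by [].
have [eab|nab] := eqVneq a b.
  have S1 : #|S| <= 1.
    rewrite -(cards1 a); apply: subset_leq_card; apply/subsetP => x xS.
    rewrite inE; apply/eqP/val_inj/eqP; rewrite eqn_leq; apply/andP; split.
      by have := bP x xS; rewrite -eab.
    exact: aP.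
  have /cards1P [x ->] : #|S| == 1.
    by rewrite eqn_leq S1 lt0n cards_eq0; apply/set0Pn; exists m0.
  rewrite big_set1 cards1; have := ltn_ord x; lia.
have bS' : b \in S :\ a by rewrite !inE eq_sym nab bSi.
rewrite (big_setD1 a aSi) (big_setD1 b bS') /=.
have cS : #|S| = (#|S :\ a :\ b|).+2.
  by rewrite (cardsD1 a S) aSi (cardsD1 b (S :\ a)) bS'.
have hS' : #|S :\ a :\ b| <= m by lia.
have := IH _ hS'.
have ab : #|S| <= b - a + 1.
  rewrite cardE -(size_map val).
  have -> : b - a + 1 = size (iota a (b - a + 1)) by rewrite size_iota.
  apply: uniq_leq_size; first by rewrite map_inj_uniq ?enum_uniq //; exact: val_inj.
  move=> x /mapP [y]; rewrite mem_enum => yS ->.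
  have h1 : (a <= y)%N := aP y yS; have h2 : (y <= b)%N := bP y yS.
  rewrite mem_iota; change (\val y) with (nat_of_ord y); lia.
have := ltn_ord b; have := ltn_ord a.
have ab' : a <= b by apply: aP.
move: (\sum_(i in S :\ a :\ b) minn i (c - i)) => s.
move: cS ab ab'; move: (#|S :\ a :\ b|) => u; move: #|S| => w.
move: (nat_of_ord a) (nat_of_ord b) => x y.
nia.
Qed.

Local Open Scope ring_scope.

Theorem mainTheorem3 (T : finType) (e : rel T) (O : T)
  (e_sym : symmetric e) (e_irr : irreflexive e)
  (e_conn : forall x y : T, connect e x y)
  (k : nat) (k_ge1 : (1 <= k)%N) (k_le_n : (k <= #|terminals O|)%N)
  (tours : seq (seq T)) (asg : T -> nat)
  (opt : optimal e O k tours asg)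
  (i : nat) (i_lt : (i < size tours)%N)
  (U_nonempty : covered O asg i != set0) :
  let t := nth [::] tours i in
  let U := covered O asg i in
  let D := (\sum_(v in U) dist e O v)%N in
  (2 * D%:R) / #|U|%:R + #|U|%:R / 2 - 1 / (2 * #|U|%:R)
    <= (tour_cost t)%:R :> rat.
Proof.
cbv zeta.
set t := nth [::] tours i. set U := covered O asg i. set D := (\sum_(v in U) dist e O v)%N.
case: opt => [[allT memT _] _].
have : is_tour e O t by apply: (allP allT); rewrite mem_nth.
have memU : forall v, v \in U -> v \in t.
  move=> v; rewrite inE => /andP [vt /eqP ai].
  by have [_] := memT v vt; rewrite ai.
rewrite /tour_cost.
case Et : t memU => [|z s'] // memU /and3P [/eqP zO hp /eqP hl].
set c := size s'.
have keyD : (4 * D + #|U| * #|U| <= 2 * #|U| * c + 1)%N.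
  pose pos (v : T) : 'I_c.+1 := inord (index v (z :: s')).
  have posE : forall v, v \in U -> (pos v : nat) = index v (z :: s').
    move=> v vU; rewrite inordK // ltnS -[c]/(size (z :: s')).-1.
    by have := memU v vU; rewrite -index_mem /=.
  have inj : {in U &, injective pos}.
    move=> v w vU wU h.
    have : index v (z :: s') = index w (z :: s') by rewrite -!posE // h.
    move=> h'; rewrite -(nth_index z (memU _ vU)) h' nth_index //; exact: memU.
  have le : (D <= \sum_(v in U) minn (pos v) (c - pos v))%N.
    apply: leq_sum => v vU; rewrite posE //.
    set j := index v (z :: s').
    have jl : (j < size (z :: s'))%N by rewrite index_mem memU.
    have sp : z :: s' = take j (z :: s') ++ v :: drop j.+1 (z :: s').
      by rewrite -{1}(cat_take_drop j (z :: s')) (drop_nth z jl) nth_index // memU.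
    have [w1 w2] := walks e_sym sp zO hp hl.
    have d1 := dist_le w1; have d2 := dist_le w2.
    rewrite size_drop in d1; rewrite size_take jl in d2.
    rewrite leq_min d2 /=; apply: leq_trans d1 _; rewrite /c /=; lia.
  have cU : #|pos @: U| = #|U| by rewrite card_in_imset.
  have := comb (pos @: U); rewrite cU (big_imset _ inj) /=.
  move: le; move: (\sum_(v in U) _)%N => s; lia.
have u0 : (0 < #|U|)%N by rewrite card_gt0.
move: keyD; move: D #|U| u0 => d u u0 keyD.
have up : 0 < u%:R :> rat by rewrite ltr0n.
have -> : 2 * d%:R / u%:R + u%:R / 2 - 1 / (2 * u%:R)
          = (4 * d + u * u - 1)%:R / (2 * u)%:R :> rat.
  rewrite natrB; last by lia.
  rewrite !natrD !natrM /=; field.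
  by rewrite !gt_eqF ?addr_gt0.
rewrite ler_pdivrMr ?ltr0n ?muln_gt0 // /=.
rewrite -natrM ler_nat; lia.
Qed.
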